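(* Let $0\neq h\in\mathbb{F}[x]$ and let $u_1,\dots,u_\ell$ be the distinct monic irreducible factors of $h$ in $\mathbb{F}[x]$ that are not central in $A_h$. Then an element $v\in A_h$ is normal (i.e. $vA_h=A_hv$) if and only if $v=u_1^{\beta_1}\cdots u_\ell^{\beta_\ell}z$ for some integers $\beta_i\ge0$ and some $z$ in the center $Z(A_h)$. If $\mathrm{char}(\mathbb{F})=p>0$, the exponents may moreover be chosen with $0\le\beta_i<p$ for all $i$.
   Context: $\mathbb{F}$ is an arbitrary field. For $h\in\mathbb{F}[x]$, $A_h$ is the unital associative $\mathbb{F}$-algebra generated by $x,\hat y$ with defining relation $\hat yx-x\hat y=h$; $\mathbb{F}[x]$ is a subalgebra of $A_h$. An irreducible factor $u$ of $h$ is central in $A_h$ iff $u'=0$. *)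

(* Defs.v *)
From HB Require Import structures.
From mathcomp Require Import all_boot all_order all_algebra.
Set Implicit Arguments. Unset Strict Implicit. Unset Printing Implicit Defensive.
Import GRing.Theory.
Local Open Scope ring_scope.

(* The algebra A_h = F<x, y^ | y^ x - x y^ = h> is realised concretely through
   its PBW basis: every element is uniquely  sum_i a_i(x) y^^i  with a_i in F[x].
   We represent it by  P : {poly {poly F}}  (outer variable = y^, coefficients
   in F[x], written on the LEFT).  The multiplication is determined by the
   relation  y^ f = f y^ + h f'  for f in F[x]. *)

Section Ah.
Variable F : fieldType.
Variable h : {poly F}.

Definition Ah := {poly {poly F}}.

Definition Dh (f : {poly F}) : {poly F} := h * f^`().

Definition Ymul (Q : Ah) : Ah := Q * 'X + map_poly Dh Q.

Definition amul (P Q : Ah) : Ah :=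
  \sum_(i < size P) (P`_i)%:P * iter i Ymul Q.

Definition ofpoly (f : {poly F}) : Ah := f%:P.

Definition Ah_x : Ah := 'X%:P.
Definition Ah_y : Ah := 'X.

Definition central (z : Ah) : Prop := forall a : Ah, amul z a = amul a z.

Definition normal_elt (v : Ah) : Prop :=
  (forall a : Ah, exists b : Ah, amul v a = amul b v) /\
  (forall a : Ah, exists b : Ah, amul a v = amul v b).

End Ah.

(* Main.v *)
Require Import Defs.
From HB Require Import structures.
From mathcomp Require Import all_boot all_order all_algebra.
From mathcomp Require Import zify ring.
From Stdlib Require Import Classical.
Set Implicit Arguments. Unset Strict Implicit. Unset Printing Implicit Defensive.
Import GRing.Theory.
Local Open Scope ring_scope.

Lemma natfact1 (a c : nat) : (0 < a)%N -> (0 < c)%N -> c = (a + c).-1 -> a = 1%N.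
Proof. lia. Qed.
Lemma natfact2 (a c : nat) : (0 < a)%N -> (0 < c)%N -> c.+1 = (a + c).-1 -> a = 2%N.
Proof. lia. Qed.

Section Alg.
Variable F : fieldType.
Variable h : {poly F}.
Local Notation Y := (Ymul h).
Local Notation am := (amul h).
Local Notation D := (Dh h).
Implicit Types (P Q R : {poly {poly F}}).

Lemma Dh0 : D 0 = 0. Proof. by rewrite /Dh deriv0 mulr0. Qed.
Lemma DhD a b : D (a + b) = D a + D b. Proof. by rewrite /Dh derivD mulrDr. Qed.
Lemma DhC (c : F) : D c%:P = 0. Proof. by rewrite /Dh derivC mulr0. Qed.
Lemma DhM a b : D (a * b) = D a * b + a * D b.
Proof. by rewrite /Dh derivM mulrDr mulrA [h * (a * _)]mulrCA mulrA. Qed.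

Lemma coef_mapD (Q : Ah F) i : (map_poly D Q)`_i = D Q`_i.
Proof. by rewrite coef_map_id0 // Dh0. Qed.

Lemma mapD_add (P Q : Ah F) : map_poly D (P + Q) = map_poly D P + map_poly D Q.
Proof. by apply/polyP=> i; rewrite coefD !coef_mapD coefD DhD. Qed.

Lemma mapD_MXaddC (P : Ah F) c :
  map_poly D (P * 'X + c%:P) = map_poly D P * 'X + (D c)%:P.
Proof.
apply/polyP=> i; rewrite coef_mapD !coefD !coefMX !coefC coef_mapD.
by case: i => [|i] /=; rewrite ?Dh0 ?add0r ?addr0 // coef_mapD.
Qed.

Lemma mapD_C (c : {poly F}) : map_poly D c%:P = (D c)%:P.
Proof. by have := mapD_MXaddC 0 c; rewrite !mul0r !add0r => ->; rewrite /map_poly size_poly0 poly_def big_ord0 mul0r add0r. Qed.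

Lemma mapD_CM (c : {poly F}) (Q : Ah F) :
  map_poly D (c%:P * Q) = c%:P * map_poly D Q + (D c)%:P * Q.
Proof. by apply/polyP=> i; rewrite coefD !coefCM !coef_mapD coefCM DhM addrC mulrC. Qed.

Lemma mapD_MX (Q : Ah F) : map_poly D (Q * 'X) = map_poly D Q * 'X.
Proof. by have := mapD_MXaddC Q 0; rewrite !addr0 Dh0 addr0. Qed.

Lemma Y0 : Y 0 = 0.
Proof. by rewrite /Ymul mul0r add0r; apply/polyP=> i; rewrite coef_mapD coef0 Dh0. Qed.
Lemma YD P Q : Y (P + Q) = Y P + Y Q.
Proof. by rewrite /Ymul mulrDl mapD_add addrACA. Qed.
Lemma YCM (c : {poly F}) Q : Y (c%:P * Q) = c%:P * Y Q + (D c)%:P * Q.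
Proof. by rewrite /Ymul mapD_CM mulrDr addrA mulrA. Qed.
Lemma YMX Q : Y (Q * 'X) = Y Q * 'X.
Proof. by rewrite /Ymul mapD_MX mulrDl. Qed.

Lemma amul_widen n P Q : (size P <= n)%N ->
  am P Q = \sum_(i < n) (P`_i)%:P * iter i Y Q.
Proof.
move=> hn; rewrite /amul (big_ord_widen n (fun i => (P`_i)%:P * iter i Y Q) hn).
rewrite big_mkcond; apply: eq_bigr => i _; case: ifP => // /negbT.
by rewrite -leqNgt => /(nth_default 0) ->; rewrite mul0r.
Qed.

Lemma amul0 Q : am 0 Q = 0.
Proof. by rewrite /amul size_poly0 big_ord0. Qed.

Lemma amul_rec P c Q : am (P * 'X + c%:P) Q = c%:P * Q + am P (Y Q).
Proof.
rewrite (@amul_widen (size P).+1); last by rewrite size_MXaddC; case: ifP.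
rewrite big_ord_recl /= coefD coefMX coefC /= add0r; congr (_ + _).
rewrite /amul; apply: eq_bigr => i _.
by rewrite coefD coefMX coefC /= addr0 -iterSr.
Qed.

Lemma amulC (c : {poly F}) Q : am c%:P Q = c%:P * Q.
Proof. by have := amul_rec 0 c Q; rewrite mul0r add0r amul0 addr0. Qed.

Lemma amulDl P1 P2 Q : am (P1 + P2) Q = am P1 Q + am P2 Q.
Proof.
set n := maxn (size P1) (size P2).
rewrite !(@amul_widen n) ?leq_maxl ?leq_maxr //; last first.
  by apply: leq_trans (size_polyD _ _) _.
rewrite -big_split /=; apply: eq_bigr => i _.
by rewrite coefD polyCD mulrDl.
Qed.

Lemma amulCMl (c : {poly F}) P Q : am (c%:P * P) Q = c%:P * am P Q.
Proof.
rewrite (@amul_widen (size P)); last first.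
  by rewrite mul_polyC size_scale_leq.
rewrite /amul mulr_sumr; apply: eq_bigr => i _.
by rewrite coefCM polyCM mulrA.
Qed.

Lemma amulDr P Q1 Q2 : am P (Q1 + Q2) = am P Q1 + am P Q2.
Proof.
elim/poly_ind: P Q1 Q2 => [|P c IH] Q1 Q2; first by rewrite !amul0 addr0.
by rewrite !amul_rec YD IH mulrDr addrACA.
Qed.

Lemma amulr0 P : am P 0 = 0.
Proof. by elim/poly_ind: P => [|P c IH]; rewrite ?amul0 // amul_rec Y0 IH mulr0 addr0. Qed.

Lemma amulY Q R : am (Y Q) R = Y (am Q R).
Proof.
elim/poly_ind: Q R => [|Q d IH] R; first by rewrite Y0 amul0 Y0.
have e : Y (Q * 'X + d%:P) = (Y Q + d%:P) * 'X + (D d)%:P.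
  by rewrite /Ymul mapD_MXaddC mulrDl !addrA mulrDl; congr (_ + _); rewrite mulrDl addrAC.
rewrite e !amul_rec amulDl IH amulC YD YCM.
by rewrite [Y _ + _]addrC addrA [(D d)%:P * R + _]addrC.
Qed.

Lemma amulA P Q R : am (am P Q) R = am P (am Q R).
Proof.
elim/poly_ind: P Q => [|P c IH] Q; first by rewrite !amul0.
by rewrite !amul_rec amulDl amulCMl IH amulY.
Qed.

Lemma amul1 Q : am 1 Q = Q.
Proof. by have := amulC 1 Q; rewrite polyC1 mul1r. Qed.

Lemma amulMX P Q : am P (Q * 'X) = am P Q * 'X.
Proof.
elim/poly_ind: P Q => [|P c IH] Q; first by rewrite !amul0 mul0r.
by rewrite !amul_rec YMX IH mulrDl mulrA.
Qed.

Lemma amulk P (k : {poly F}) Q : D k = 0 -> am P (k%:P * Q) = k%:P * am P Q.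
Proof.
move=> Dk; elim/poly_ind: P Q => [|P c IH] Q; first by rewrite !amul0 mulr0.
by rewrite !amul_rec YCM Dk mul0r addr0 IH mulrDr mulrCA.
Qed.

Lemma amulr1 P : am P 1 = P.
Proof.
elim/poly_ind: P => [|P c IH]; first by rewrite amul0.
rewrite amul_rec mulr1 /Ymul mul1r -polyC1.
have -> : map_poly D 1%:P = 0 by rewrite mapD_C -polyC1 DhC.
by rewrite addr0 -[X in am P X]mul1r amulMX ?polyC1 IH addrC.
Qed.

Lemma amulX P : am P 'X = P * 'X.
Proof. by rewrite -[X in am P X]mul1r amulMX amulr1. Qed.

Lemma amulrk P (k : {poly F}) : D k = 0 -> am P k%:P = k%:P * P.
Proof. by move=> Dk; have := @amulk P k 1 Dk; rewrite !mulr1 amulr1. Qed.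

Lemma size_Y Q : Q != 0 -> size (Y Q) = (size Q).+1 /\ lead_coef (Y Q) = lead_coef Q.
Proof.
move=> Q0; have hs : (size (map_poly D Q) < size (Q * 'X)%R)%N.
  by rewrite size_mulX // ltnS /map_poly size_poly.
by rewrite /Ymul size_addl // lead_coefDl // size_mulX // lead_coefMX.
Qed.

Lemma Y_neq0 Q : Q != 0 -> Y Q != 0.
Proof. by move=> Q0; rewrite -size_poly_gt0 (size_Y Q0).1. Qed.

Lemma size_amul P Q : P != 0 -> Q != 0 ->
  size (am P Q) = (size P + size Q).-1 /\ lead_coef (am P Q) = lead_coef P * lead_coef Q.
Proof.
elim/poly_ind: P Q => [|P c IH] Q; first by rewrite eqxx.
move=> P0 Q0; have [P00|P1] := eqVneq P 0.
  rewrite P00 mul0r add0r in P0 *.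
  have c0 : c != 0 by apply/negP => /eqP c00; move: P0; rewrite c00 polyC0 eqxx.
  by rewrite amulC size_Cmul ?lead_coefM ?lead_coefC // size_polyC c0.
have [s1 l1] := IH _ P1 (Y_neq0 Q0).
have [sY lY] := size_Y Q0.
have hsz : (size (c%:P * Q)%R < size (am P (Y Q)))%N.
  rewrite s1 sY addnS /= mul_polyC; apply: leq_ltn_trans (size_scale_leq _ _) _.
  by rewrite addnC -{1}[size Q]addn0 ltn_add2l size_poly_gt0.
have hP : (size (c%:P) < size (P * 'X)%R)%N.
  by rewrite size_mulX // ltnS size_polyC; apply: leq_trans (leq_b1 _) _; rewrite size_poly_gt0.
rewrite amul_rec addrC size_addl // lead_coefDl // s1 l1 lY (@lead_coefDl _ (P * 'X) c%:P hP) (@size_addl _ (P * 'X) c%:P hP).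
rewrite size_mulX // lead_coefMX.
by rewrite sY addnS addSn.
Qed.

Lemma amulXl Q : am 'X Q = Y Q.
Proof.
have := amul_rec 1 0 Q; rewrite mul1r polyC0 mul0r add0r amul1.
by rewrite (_ : 'X + 0 = 'X) // addr0.
Qed.

Lemma gen_all (Pr : {poly {poly F}} -> Prop) :
  (forall a b, Pr a -> Pr b -> Pr (a + b)) ->
  (forall a b, Pr a -> Pr b -> Pr (am a b)) ->
  (forall c : F, Pr (c%:P%:P)) -> Pr ('X%:P) -> Pr 'X -> forall a, Pr a.
Proof.
move=> hD hM hc hx hX.
have h0 : Pr 0 by have := hc 0; rewrite !polyC0.
have hf : forall f : {poly F}, Pr f%:P.
  elim/poly_ind => [|f c IH]; first by rewrite polyC0.
  have -> : (f * 'X + c%:P)%:P = am f%:P 'X%:P + c%:P%:P.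
    by rewrite amulC polyCD polyCM.
  by apply: hD => //; apply: hM.
elim/poly_ind => [//|a f IH].
by rewrite -amulX; apply: hD => //; apply: hM.
Qed.

Lemma central_gen z : am z 'X%:P = am 'X%:P z -> am z 'X = am 'X z ->
  forall a, am z a = am a z.
Proof.
move=> hx hX; apply: gen_all => //.
- by move=> a b ha hb; rewrite amulDr amulDl ha hb.
- by move=> a b ha hb; rewrite -amulA ha amulA hb amulA.
- by move=> c; rewrite amulC amulrk // DhC.
Qed.

Definition lnorm v a := exists b, am v a = am b v.
Definition rnorm v a := exists b, am a v = am v b.

Lemma lnorm_all v : lnorm v 'X%:P -> lnorm v 'X -> forall a, lnorm v a.
Proof.
move=> hx hX; apply: gen_all => //.
- by move=> a b [a' ha] [b' hb]; exists (a' + b'); rewrite amulDr amulDl ha hb.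
- by move=> a b [a' ha] [b' hb]; exists (am a' b'); rewrite -amulA ha amulA hb amulA.
- by move=> c; exists c%:P%:P; rewrite amulC amulrk // DhC.
Qed.

Lemma rnorm_all v : rnorm v 'X%:P -> rnorm v 'X -> forall a, rnorm v a.
Proof.
move=> hx hX; apply: gen_all => //.
- by move=> a b [a' ha] [b' hb]; exists (a' + b'); rewrite amulDr amulDl ha hb.
- by move=> a b [a' ha] [b' hb]; exists (am a' b'); rewrite amulA hb -amulA ha amulA.
- by move=> c; exists c%:P%:P; rewrite amulC amulrk // DhC.
Qed.

Lemma normal_mul v1 v2 : normal_elt h v1 -> normal_elt h v2 -> normal_elt h (am v1 v2).
Proof.
move=> [l1 r1] [l2 r2]; split=> a.
  have [b2 e2] := l2 a; have [b1 e1] := l1 b2.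
  by exists b1; rewrite amulA e2 -amulA e1 amulA.
have [b1 e1] := r1 a; have [b2 e2] := r2 b1.
by exists b2; rewrite -amulA e1 amulA e2 amulA.
Qed.

Lemma normal1 : normal_elt h 1.
Proof. by split=> a; exists a; rewrite amul1 amulr1. Qed.

Lemma normal_central q z : normal_elt h q -> (forall a, am z a = am a z) ->
  normal_elt h (am q z).
Proof.
move=> [lq rq] cz; split=> a.
  have [b e] := lq a; exists b.
  by rewrite amulA (cz a) -amulA e amulA.
have [b e] := rq a; exists b.
by rewrite -amulA e amulA -(cz b) amulA.
Qed.

Lemma normal_u u : u %| h -> normal_elt h (ofpoly u).
Proof.
move=> uh; rewrite /ofpoly; set w := h %/ u * u^`().
have Du : D u = w * u by rewrite /Dh /w -{1}(divpK uh) mulrAC.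
have Yu : Y u%:P = u%:P * 'X + (w * u)%:P.
  by rewrite /Ymul mapD_C Du mulrC.
split.
  apply: lnorm_all.
    by exists 'X%:P; rewrite !amulC mulrC.
  exists ('X + (- w)%:P); rewrite amulX amulDl amulXl amulC Yu -addrA.
  by rewrite polyCN mulNr polyCM addrN addr0 mulrC.
apply: rnorm_all.
  by exists 'X%:P; rewrite !amulC mulrC.
exists ('X + w%:P); rewrite amulXl Yu amulC mulrDr polyCM.
by rewrite [u%:P * w%:P]mulrC [u%:P * 'X]mulrC.
Qed.

Lemma normal_x v : v != 0 -> lnorm v 'X%:P -> am v 'X%:P = 'X%:P * v.
Proof.
move=> v0 [b e].
have x0 : ('X%:P : {poly {poly F}}) != 0 by rewrite polyC_eq0 polyX_eq0.
have [s1 l1] := size_amul v0 x0.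
rewrite size_polyC polyX_eq0 addn1 /= lead_coefC in s1 l1.
have b0 : b != 0.
  apply/negP=> /eqP b00; move: e; rewrite b00 amul0 => e.
  by move: s1; rewrite e size_poly0 => /eqP; rewrite eq_sym size_poly_eq0 (negPf v0).
have [s2 l2] := size_amul b0 v0.
rewrite -e s1 in s2 l2.
have sb : size b = 1%N.
  apply: (@natfact1 _ (size v)) => //; first by rewrite size_poly_gt0.
  by rewrite size_poly_gt0.
have eb := size1_polyC (eq_leq sb).
have lb : lead_coef b = b`_0 by rewrite /lead_coef sb.
have l3 : lead_coef v * b`_0 = lead_coef v * 'X by rewrite -l1 l2 lb mulrC.
have : b`_0 = 'X.
  by apply: (mulfI _ l3); rewrite lead_coef_eq0.
by move=> eb0; rewrite e eb eb0 amulC.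
Qed.

Lemma normal_y v : v != 0 -> lnorm v 'X -> exists g, map_poly D v = - (g%:P * v).
Proof.
move=> v0 [b e].
have X0 : ('X : {poly {poly F}}) != 0 by rewrite polyX_eq0.
have [s1 l1] := size_amul v0 X0.
rewrite size_polyX addn2 /= lead_coefX mulr1 in s1 l1.
have b0 : b != 0.
  apply/negP=> /eqP b00; move: e; rewrite b00 amul0 => e.
  by move: s1; rewrite e size_poly0.
have [s2 l2] := size_amul b0 v0.
rewrite -e s1 in s2 l2.
have sb : size b = 2%N.
  apply: (@natfact2 _ (size v)) => //; first by rewrite size_poly_gt0.
  by rewrite size_poly_gt0.
have lb : lead_coef b = 1.
  by apply: (mulIf (x := lead_coef v)); rewrite ?lead_coef_eq0 // mul1r -l2 l1.
have eb : b = 'X + (b`_0)%:P.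
  apply/polyP=> i; rewrite coefD coefX coefC.
  case: i => [|[|i]] /=; first by rewrite add0r.
    by rewrite addr0 -lb /lead_coef sb.
  by rewrite addr0 nth_default // sb.
set g := b`_0 in eb *; exists g.
move: e; rewrite amulX eb amulDl amulXl amulC /Ymul -addrA -{1}[v * 'X]addr0 => /addrI /esym /eqP.
by rewrite addr_eq0 => /eqP.
Qed.
End Alg.

Section NT.
Variables (F : fieldType) (h : {poly F}) (s : seq {poly F}).
Hypothesis hnz : h != 0.
Hypothesis s_uniq : uniq s.
Hypothesis hs : forall u, u \in s ->
  [/\ u \is monic, irreducible_poly u, u %| h & u^`() != 0].
Hypothesis hs' : forall u, u \is monic -> irreducible_poly u -> u %| h ->
  u^`() != 0 -> u \in s.

Implicit Types (u w a q t m : {poly F}).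

Definition prodb (b : {poly F} -> nat) := \prod_(u <- s) u ^+ b u.
Definition rest (b : {poly F} -> nat) u := \prod_(w <- rem u s) w ^+ b w.
Definition expc (b : {poly F} -> nat) :=
  forall u, u \in s -> forall p, p \in [pchar F] -> (b u < p)%N.
Definition upd (b : {poly F} -> nat) u k w := if w == u then k else b w.

Lemma prodb_split b u : u \in s -> prodb b = u ^+ b u * rest b u.
Proof. by move=> us; rewrite /prodb (big_rem _ us). Qed.

Lemma rest_upd b u k : u \in s -> rest (upd b u k) u = rest b u.
Proof.
move=> us; apply: eq_big_seq => w wr; rewrite /upd; case: eqP => // wu.
by move: wr; rewrite wu mem_rem_uniqF.
Qed.

Lemma prodb_upd b u k : u \in s -> prodb (upd b u k) = u ^+ k * rest b u.
Proof. by move=> us; rewrite (prodb_split _ us) rest_upd // /upd eqxx. Qed.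

Lemma prodb_monic b : prodb b \is monic.
Proof.
rewrite /prodb big_seq; apply: monic_prod => u us; apply: monic_exp.
by case: (hs us).
Qed.

Lemma prodb_neq0 b : prodb b != 0.
Proof. exact: monic_neq0 (prodb_monic b). Qed.

Lemma irr_size u : irreducible_poly u -> (1 < size u)%N.
Proof. by case. Qed.

Lemma irr_neq0 u : irreducible_poly u -> u != 0.
Proof. exact: irredp_neq0. Qed.

Lemma rest_coprime b u : u \in s -> coprimep u (rest b u).
Proof.
move=> us; have [mu iu _ _] := hs us.
rewrite /rest big_seq; apply: (big_ind (coprimep u)).
- by rewrite coprimep1.
- by move=> x y cx cy; rewrite coprimepMr cx cy.
move=> w wr; apply: coprimep_expr.
have ws : w \in s by apply: mem_rem wr.
have [mw iw _ _] := hs ws.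
rewrite irreducible_poly_coprime //; apply/negP => uw.
have : u %= w.
  apply: iw.2 => //; rewrite neq_ltn; apply/orP; right; exact: irr_size.
rewrite eqp_monic // => /eqP e; move: wr; rewrite -e mem_rem_uniqF //.
Qed.

Lemma cop_deriv u : irreducible_poly u -> u^`() != 0 -> coprimep u u^`().
Proof.
move=> iu d0; rewrite irreducible_poly_coprime //; apply/negP => d.
have := dvdp_leq d0 d; rewrite leqNgt lt_size_deriv //.
exact: irr_neq0.
Qed.

Lemma natr_ne0 k : (0 < k)%N -> (forall p, p \in [pchar F] -> (k < p)%N) ->
  k%:R != 0 :> F.
Proof.
move=> k0 hk; apply/negP => /eqP kz.
have [p pc] := natf0_pchar k0 (introT eqP kz).
have : (p %| k)%N by rewrite (dvdn_pcharf pc) kz.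
move=> /(dvdn_leq k0); rewrite leqNgt hk //.
Qed.

Lemma natmul_polyC (k : nat) (x : {poly F}) : x *+ k = (k%:R : F) *: x.
Proof. by rewrite -mul_polyC polyC_natr mulr_natl. Qed.

Lemma derivXp (w : {poly F}) p : p \in [pchar F] -> (w ^+ p)^`() = 0.
Proof.
move=> pc; rewrite deriv_exp natmul_polyC (pcharf0 pc) scale0r //.
Qed.

Lemma irr_factor n a : (size a <= n)%N -> (1 < size a)%N ->
  exists w, irreducible_poly w /\ w %| a.
Proof.
elim: n a => [|n IH] a sa a1; first by move: a1; rewrite ltnNge (leq_trans sa).
case: (classic (irreducible_poly a)) => ia; first by exists a; split; rewrite ?dvdpp.
have : ~ (forall q, size q != 1%N -> q %| a -> q %= a).
  by move=> H; apply: ia; split.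
move=> /not_all_ex_not [q] H1; have [sq H2] := imply_to_and _ _ H1; have [qa nqa] := imply_to_and _ _ H2.
have a0 : a != 0 by rewrite -size_poly_gt0 (ltn_trans _ a1).
have q0 : q != 0 by apply/negP => /eqP q00; move: qa; rewrite q00 dvd0p (negPf a0).
have lq : (size q < size a)%N.
  rewrite ltn_neqAle dvdp_leq // andbT dvdp_size_eqp //.
  by apply/negP.
have q1 : (1 < size q)%N.
  by move: sq q0; rewrite -size_poly_gt0; case: (size q) => [|[|m]].
have sqn : (size q <= n)%N by rewrite -ltnS (leq_trans lq sa).
have [w [iw wq]] := IH q sqn q1.
by exists w; split=> //; apply: dvdp_trans qa.
Qed.

Lemma lt_size_mul t m : t != 0 -> (1 < size m)%N -> (size t < size (t * m)%R)%N.
Proof.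
move=> t0 m1; have m0 : m != 0 by rewrite -size_poly_gt0 (ltn_trans _ m1).
by rewrite size_mul //; case: (size m) m1 => [|[|k]] // _; rewrite addnS /= addnS ltnS leq_addr.
Qed.

Lemma predn_gt (x y k : nat) : (0 < x)%N -> (k <= y)%N -> x.-1 = y -> (k < x)%N.
Proof. by case: x => [|x] //= _ ky e; rewrite ltnS e. Qed.

Lemma size_exp_gt w k : (1 < size w)%N -> (0 < k)%N -> (1 < size (w ^+ k))%N.
Proof.
move=> w1 k0; have w0 : w != 0 by rewrite -size_poly_gt0 ltnW.
apply: (predn_gt _ _ (size_exp w k)); first by rewrite size_poly_gt0 expf_neq0.
by rewrite muln_gt0 k0 andbT -ltnS prednK // ltnW.
Qed.

Lemma size_exp_ge w k : (1 < size w)%N -> (k < size (w ^+ k))%N.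
Proof.
move=> w1; have w0 : w != 0 by rewrite -size_poly_gt0 ltnW.
apply: (predn_gt _ _ (size_exp w k)); first by rewrite size_poly_gt0 expf_neq0.
by rewrite leq_pmull // -ltnS prednK // ltnW.
Qed.

Lemma normalize_in w : irreducible_poly w -> w^`() != 0 -> w %| h ->
  exists2 u, u \in s & u %= w.
Proof.
move=> iw dw wh; set c := lead_coef w.
have c0 : c != 0 by rewrite lead_coef_eq0 irr_neq0.
have ci0 : c^-1 != 0 by rewrite invr_eq0.
set u := c^-1 *: w; have uw : u %= w by apply: eqp_scale.
exists u => //; apply: hs'.
- by rewrite monicE lead_coefZ mulVf.
- split; first by rewrite size_scale // irr_size.
  move=> q sq qu; apply: (@eqp_trans _ w); last by rewrite eqp_sym.
  by apply: iw.2 => //; rewrite -(eqp_dvdr _ uw).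
- by rewrite (eqp_dvdl _ uw).
- by rewrite derivZ scaler_eq0 negb_or ci0.
Qed.

Lemma K0 n : forall a, (size a <= n)%N -> a != 0 -> a %| h * a^`() ->
  (forall u, u \in s -> ~~ (u %| a)) -> a^`() = 0.
Proof.
elim: n => [|n IH] a sa a0 ha hna.
  by move: a0; rewrite -size_poly_gt0; move: sa; rewrite leqn0 => /eqP ->.
case: (leqP (size a) 1) => sa1.
  by rewrite (size1_polyC sa1) derivC.
have [w [iw wa]] := irr_factor (leqnn _) sa1.
have w0 := irr_neq0 iw; have sw := irr_size iw.
have hdiv : forall t m, m != 0 -> (1 < size m)%N -> a = t * m ->
    (forall u, u \in s -> ~~ (u %| t)) /\ (size t <= n)%N /\ t != 0.
  move=> t m m0 m1 e; split.
    by move=> u us; apply/negP => ut; move: (hna u us); rewrite e (dvdp_mulr _ ut).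
  have t0 : t != 0 by apply/negP => /eqP t00; move: a0; rewrite e t00 mul0r eqxx.
  split=> //; rewrite -ltnS; apply: leq_trans sa; rewrite e; exact: lt_size_mul.
case: (eqVneq w^`() 0) => dw.
  set a1 := a %/ w; have ea : a = a1 * w by rewrite divpK.
  have [hn1 [sn1 a10]] := hdiv a1 w w0 sw ea.
  have da : a^`() = a1^`() * w by rewrite ea derivM dw mulr0 addr0.
  have ha1 : a1 %| h * a1^`().
    by move: ha; rewrite da {1}ea mulrA dvdp_mul2r.
  by rewrite da (IH a1 sn1 a10 ha1 hn1) mul0r.
have nwh : ~~ (w %| h).
  apply/negP => wh; have [u us uw] := normalize_in iw dw wh.
  by move: (hna u us); rewrite (eqp_dvdl _ uw) wa.
have cwh : coprimep w h by rewrite irreducible_poly_coprime.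
have cww : coprimep w w^`() by apply: cop_deriv.
have claim : forall j, (forall i, (0 < i)%N -> (i < j)%N -> i%:R != 0 :> F) ->
    w ^+ j %| a.
  elim => [|j IHj] hj; first by rewrite expr0 dvd1p.
  have wja : w ^+ j %| a by apply: IHj => i i0 ij; apply: hj => //; lia.
  case: j IHj hj wja => [|j] _ hj wja; first by rewrite expr1.
  set t := a %/ w ^+ j.+1; have et : a = t * w ^+ j.+1 by rewrite divpK.
  have hda : w ^+ j.+1 %| a^`().
    have : w ^+ j.+1 %| h * a^`() by apply: dvdp_trans ha.
    by rewrite Gauss_dvdpr // coprimep_expl // .
  have E : a^`() = t^`() * w ^+ j.+1 + w ^+ j * ((j.+1)%:R%:P * (t * w^`())).
    rewrite {1}et derivM deriv_exp polyC_natr /= -mulr_natl.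
    move: (w ^+ j : {poly F}) (j.+1%:R : {poly F}) => W K; congr (_ + _).
    ring.
  move: hda; rewrite E dvdp_addr; last by apply: dvdp_mull; apply: dvdpp.
  rewrite exprSr dvdp_mul2l ?expf_neq0 //.
  rewrite mul_polyC dvdpZr ?hj // Gauss_dvdpl // => wt.
  by rewrite et exprS; apply: dvdp_mul.
case: (classic (exists p, p \in [pchar F])) => [[p pc]|npc].
  have pp := pcharf_prime pc; have p0 := prime_gt0 pp.
  have wpa : w ^+ p %| a.
    apply: claim => i i0 ip; apply/negP => /eqP iz.
    have : (p %| i)%N by rewrite (dvdn_pcharf pc) iz.
    by move/(dvdn_leq i0); rewrite leqNgt ip.
  set t := a %/ w ^+ p; have et : a = t * w ^+ p by rewrite divpK.
  have wp0 : w ^+ p != 0 by rewrite expf_neq0.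
  have [hn1 [sn1 t0]] := hdiv t (w ^+ p) wp0 (size_exp_gt sw p0) et.
  have da : a^`() = t^`() * w ^+ p by rewrite et derivM derivXp // mulr0 addr0.
  have ht : t %| h * t^`().
    by move: ha; rewrite da {1}et mulrA dvdp_mul2r.
  by rewrite da (IH t sn1 t0 ht hn1) mul0r.
have : w ^+ size a %| a.
  apply: claim => i i0 _; apply/negP => iz; apply: npc.
  exact: natf0_pchar i0 iz.
move=> /(dvdp_leq a0); rewrite leqNgt size_exp_ge //.
Qed.

Lemma rest_neq0 b u : u \in s -> rest b u != 0.
Proof.
by move=> us; have := prodb_neq0 b; rewrite (prodb_split _ us) mulf_eq0 negb_or => /andP[].
Qed.

Lemma K n : forall a, (size a <= n)%N -> a != 0 -> a %| h * a^`() ->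
  exists b, [/\ expc b, prodb b %| a & (a %/ prodb b)^`() = 0].
Proof.
elim: n => [|n IH] a sa a0 ha.
  by move: a0; rewrite -size_poly_gt0; move: sa; rewrite leqn0 => /eqP ->.
case: (classic (exists2 u, u \in s & u %| a)) => [[u us ua]|nu]; last first.
  have a'0 : a^`() = 0.
    apply: (K0 (leqnn _) a0 ha) => u us; apply/negP => ua; apply: nu; by exists u.
  exists (fun _ => 0%N); split.
  - by move=> u _ p pc; apply: prime_gt0; apply: pcharf_prime pc.
  - by rewrite /prodb big1 ?dvd1p // => u _; rewrite expr0.
  - by rewrite /prodb big1 ?divp1 // => u _; rewrite expr0.
have [mu iu uh du] := hs us.
have u0 := irr_neq0 iu.
set a1 := a %/ u; have ea : a = a1 * u by rewrite divpK.
have a10 : a1 != 0 by apply/negP => /eqP a100; move: a0; rewrite ea a100 mul0r eqxx.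
have sa1 : (size a1 <= n)%N.
  by rewrite -ltnS; apply: leq_trans sa; rewrite ea; apply: lt_size_mul => //; apply: irr_size.
have ha1 : a1 %| h * a1^`().
  set hu := h %/ u; have eh : h = hu * u by rewrite divpK.
  have E : h * a^`() = u * (h * a1^`()) + a * (hu * u^`()).
    by rewrite ea derivM eh; ring.
  move: ha; rewrite E dvdp_addl; last by apply: dvdp_mulr; apply: dvdpp.
  by rewrite ea mulrC dvdp_mul2l.
have [b1 [eb1 qa1 dr1]] := IH a1 sa1 a10 ha1.
set q1 := prodb b1 in qa1 dr1; set r1 := a1 %/ q1 in dr1.
have er1 : a1 = r1 * q1 by rewrite divpK.
case: (classic (forall p, p \in [pchar F] -> ((b1 u).+1 < p)%N)) => hp.
  exists (upd b1 u (b1 u).+1).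
  have ep : prodb (upd b1 u (b1 u).+1) = u * q1.
    by rewrite prodb_upd // exprS -mulrA /q1 (prodb_split _ us).
  have ea2 : a = r1 * (u * q1) by rewrite ea er1; ring.
  rewrite ep; split.
  - move=> w ws p pc; rewrite /upd; case: eqP => [_|_]; [exact: hp | exact: eb1].
  - by rewrite ea2 dvdp_mull.
  - by rewrite ea2 mulpK // mulf_neq0 // prodb_neq0.
have [p H1] := not_all_ex_not _ _ hp; have [pc np] := imply_to_and _ _ H1.
have bp : (b1 u).+1 = p.
  have bl := eb1 u us p pc; apply/eqP; rewrite eqn_leq bl /= leqNgt; apply/negP => H; exact: np H.
exists (upd b1 u 0).
have R0 := rest_neq0 b1 us.
have ep : prodb (upd b1 u 0) = rest b1 u by rewrite prodb_upd // expr0 mul1r.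
have ea2 : a = (r1 * u ^+ p) * rest b1 u.
  by rewrite ea er1 /q1 (prodb_split _ us) -bp exprSr; ring.
rewrite ep; split.
- move=> w ws p' pc'; rewrite /upd; case: eqP => [_|_]; last exact: eb1.
  by apply: prime_gt0; apply: pcharf_prime pc'.
- by rewrite ea2 dvdp_mull.
- by rewrite ea2 mulpK // derivM derivXp // dr1 mul0r mulr0 addr0.
Qed.
Lemma Qlem n : forall (c : {poly F}) b, (size c <= n)%N -> expc b ->
  prodb b * c^`() = (prodb b)^`() * c -> prodb b %| c.
Proof.
elim: n => [|n IH] c b sc eb H.
  by move: sc; rewrite leqn0 size_poly_eq0 => /eqP ->; rewrite dvdp0.
have [->|c0] := eqVneq c 0; first by rewrite dvdp0.
case: (classic (exists2 u, u \in s & (0 < b u)%N)) => [[u us bu]|nb]; last first.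
  rewrite /prodb big1_seq ?dvd1p // => u /andP[_ us].
  have : b u = 0%N by case: (b u) (fun H => nb (ex_intro2 _ _ u us H)) => // k H0; case: H0.
  by move=> ->; rewrite expr0.
have [mu iu uh du] := hs us; have u0 := irr_neq0 iu.
set k := b u; set R := rest b u.
have ek : k = (k.-1).+1 by rewrite prednK.
set k' := k.-1 in ek.
have eq : prodb b = u ^+ k'.+1 * R by rewrite (prodb_split _ us) -ek.
have eq' : prodb (upd b u k') = u ^+ k' * R by rewrite prodb_upd.
have R0 : R != 0 by apply: rest_neq0.
have kne : k%:R != 0 :> F.
  apply: natr_ne0; first by [].
  by move=> p pc; apply: eb.
have key : u ^+ k' * (u * (R * c^`() - R^`() * c)) =
           u ^+ k' * ((k%:R)%:P * (u^`() * R * c)).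
  apply/eqP; rewrite -subr_eq0; apply/eqP.
  have : prodb b * c^`() - (prodb b)^`() * c = 0 by rewrite H subrr.
  rewrite eq derivM deriv_exp /= -mulr_natl !exprSr -ek polyC_natr.
  move: (u ^+ k' : {poly F}) (k%:R : {poly F}) => W K0 <-; ring.
have e1 : u * (R * c^`() - R^`() * c) = (k%:R)%:P * (u^`() * R * c).
  by apply: (mulfI _ key); rewrite expf_neq0.
have uc : u %| c.
  have : u %| (k%:R)%:P * (u^`() * R * c) by rewrite -e1 dvdp_mulIl.
  rewrite mul_polyC dvdpZr // -mulrA Gauss_dvdpr; last by apply: cop_deriv.
  by rewrite Gauss_dvdpr //; apply: rest_coprime.
set c1 := c %/ u; have ec : c = c1 * u by rewrite divpK.
have c10 : c1 != 0 by apply/negP => /eqP c100; move: c0; rewrite ec c100 mul0r eqxx.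
have sc1 : (size c1 <= n)%N.
  by rewrite -ltnS; apply: leq_trans sc; rewrite ec; apply: lt_size_mul => //; apply: irr_size.
have eb' : expc (upd b u k').
  move=> w ws p pc; rewrite /upd; case: eqP => [_|_]; last exact: eb.
  by apply: leq_ltn_trans (eb u us p pc); rewrite -/k ek.
have H' : prodb (upd b u k') * c1^`() = (prodb (upd b u k'))^`() * c1.
  apply/eqP; rewrite -subr_eq0; apply/eqP; apply: (mulfI (x := u * u)); first by rewrite mulf_neq0.
  rewrite mulr0; have : prodb b * c^`() - (prodb b)^`() * c = 0 by rewrite H subrr.
  rewrite eq eq' ec exprSr !derivM; move: (u ^+ k' : {poly F}) => W <-; ring.
have := IH c1 (upd b u k') sc1 eb' H'.
by rewrite eq' eq ec exprSr -mulrA [u * R]mulrC mulrA => /dvdp_mul; apply; apply: dvdpp.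
Qed.

Lemma NTmain (cf : nat -> {poly F}) g i0 : cf i0 != 0 ->
  (forall i, h * (cf i)^`() = - (g * cf i)) ->
  exists b, expc b /\ forall i, prodb b %| cf i /\ (cf i %/ prodb b)^`() = 0.
Proof.
move=> a0 hg; set a := cf i0.
have ha : a %| h * a^`() by rewrite hg -mulNr mulrC dvdp_mulIl.
have [b [eb qa dr]] := K (leqnn _) a0 ha.
exists b; split=> // i.
set q := prodb b in qa dr *; set r := a %/ q in dr.
have er : a = r * q by rewrite divpK.
have r0 : r != 0 by apply/negP => /eqP r00; move: a0; rewrite -/a er r00 mul0r eqxx.
have q0 : q != 0 by apply: prodb_neq0.
have e1 : a^`() * cf i = a * (cf i)^`().
  apply/eqP; rewrite -subr_eq0; apply/eqP; apply: (mulfI hnz); rewrite mulr0.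
  have E : h * (a^`() * cf i - a * (cf i)^`()) = (h * a^`()) * cf i - a * (h * (cf i)^`()) by ring.
  by rewrite E !hg -/a; ring.
have e2 : q * (cf i)^`() = q^`() * cf i.
  apply: (mulfI r0); move: e1; rewrite er derivM dr mul0r add0r => e1.
  by rewrite !mulrA e1.
have qc : q %| cf i by apply: (Qlem (leqnn _) eb e2).
split=> //; set t := cf i %/ q; have et : cf i = t * q by rewrite divpK.
have E : q * q * t^`() = q * (cf i)^`() - q^`() * cf i by rewrite et derivM; ring.
rewrite e2 subrr in E.
by apply: (mulfI (mulf_neq0 q0 q0)); rewrite E mulr0.
Qed.
End NT.

Section Main.
Variables (F : fieldType) (h : {poly F}) (s : seq {poly F}).
Hypothesis hnz : h != 0.
Hypothesis s_uniq : uniq s.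
Hypothesis s_spec : forall u : {poly F}, u \in s <->
        [/\ u \is monic, irreducible_poly u, u %| h & ~ central h (ofpoly u)].

Lemma central_deriv u : central h (ofpoly u) <-> u^`() = 0.
Proof.
split=> [c|du].
  have := c 'X; rewrite /ofpoly amulC amulXl /Ymul mapD_C.
  move=> e; have : ((Dh h u)%:P : {poly {poly F}}) = 0.
    by apply: (addrI (u%:P * 'X)); rewrite addr0 -e.
  move=> /eqP; rewrite polyC_eq0 /Dh mulf_eq0 (negPf hnz) /= => /eqP //.
move=> a; rewrite /ofpoly amulC amulrk //.
by rewrite /Dh du mulr0.
Qed.

Lemma hs u : u \in s -> [/\ u \is monic, irreducible_poly u, u %| h & u^`() != 0].
Proof.
move=> /s_spec [m i d c]; split=> //; apply/negP => /eqP du; apply: c.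
by apply/central_deriv.
Qed.

Lemma hs' u : u \is monic -> irreducible_poly u -> u %| h -> u^`() != 0 -> u \in s.
Proof.
move=> m i d du; apply/s_spec; split=> // /central_deriv du0.
by move: du; rewrite du0 eqxx.
Qed.

Lemma normal_prod (b : {poly F} -> nat) :
  normal_elt h (ofpoly (\prod_(u <- s) u ^+ b u)).
Proof.
rewrite big_seq; apply: (big_ind (fun f => normal_elt h (ofpoly f))).
- by rewrite /ofpoly polyC1; apply: normal1.
- move=> x y nx ny; rewrite /ofpoly polyCM -(amulC h); exact: normal_mul.
move=> u us; have [_ _ uh _] := hs us.
elim: (b u) => [|k IH]; first by rewrite expr0 /ofpoly polyC1; apply: normal1.
by rewrite exprS /ofpoly polyCM -(amulC h); apply: normal_mul => //; apply: normal_u.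
Qed.

Lemma main_fwd v : normal_elt h v ->
  exists (beta : {poly F} -> nat) (z : Ah F),
   [/\ expc s beta, central h z & v = amul h (ofpoly (\prod_(u <- s) u ^+ beta u)) z].
Proof.
move=> nv; have [->|v0] := eqVneq v 0.
  exists (fun _ => 0%N), 0; split.
  - by move=> u _ p pc; apply: prime_gt0; apply: pcharf_prime pc.
  - by move=> a; rewrite amul0 amulr0.
  - by rewrite amulr0.
have vx := normal_x v0 (nv.1 'X%:P).
have [g eg] := normal_y v0 (nv.1 'X).
have hg : forall i, h * (v`_i)^`() = - (g * v`_i).
  move=> i; have e2 : (map_poly (Dh h) v)`_i = (- (g%:P * v))`_i by rewrite eg.
  by move: e2; rewrite coef_mapD coefN coefCM /Dh.
have l0 : v`_(size v).-1 != 0 by rewrite -/(lead_coef v) lead_coef_eq0.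
have [b [eb hb]] := NTmain hnz s_uniq hs hs' l0 hg.
set q := prodb s b in hb.
have q0 : q != 0 by exact: (prodb_neq0 hs b).
set z := map_poly (fun c => c %/ q) v.
have cz : forall i, z`_i = v`_i %/ q by move=> i; rewrite coef_map_id0 // div0p.
have ev : v = q%:P * z.
  by apply/polyP => i; rewrite coefCM cz mulrC divpK //; case: (hb i).
exists b, z; split=> //; last by rewrite /ofpoly amulC -ev.
apply: central_gen.
  apply: (mulfI (x := q%:P)); first by rewrite polyC_eq0.
  rewrite -amulCMl -ev vx ev amulC.
  by rewrite mulrCA.
rewrite amulX amulXl /Ymul.
have -> : map_poly (Dh h) z = 0.
  by apply/polyP => i; rewrite coef_mapD cz coef0 /Dh; case: (hb i) => _ ->; rewrite mulr0.
by rewrite addr0.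
Qed.
End Main.

Theorem theorem7p2 (F : fieldType) (h : {poly F}) (hnz : h != 0)
    (s : seq {poly F}) (s_uniq : uniq s)
    (s_spec : forall u : {poly F}, u \in s <->
        [/\ u \is monic, irreducible_poly u, u %| h & ~ central h (ofpoly u)]) :
  (forall v : Ah F,
     normal_elt h v <->
     exists (beta : {poly F} -> nat) (z : Ah F),
       central h z /\ v = amul h (ofpoly (\prod_(u <- s) u ^+ beta u)) z) /\
  (forall p : nat, p \in [pchar F] ->
     forall v : Ah F, normal_elt h v ->
     exists (beta : {poly F} -> nat) (z : Ah F),
       [/\ forall u, u \in s -> (beta u < p)%N,
           central h z &
           v = amul h (ofpoly (\prod_(u <- s) u ^+ beta u)) z]).
Proof.
split.
  move=> v; split.
    by move=> nv; have [b [z [_ cz ev]]] := main_fwd hnz s_uniq s_spec nv; exists b, z.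
  move=> [b [z [cz ->]]]; apply: normal_central => //.
  exact: normal_prod hnz s_spec b.
move=> p pc v nv; have [b [z [eb cz ev]]] := main_fwd hnz s_uniq s_spec nv.
by exists b, z; split=> // u us; apply: eb.
Qed.
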